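(* For every positive integer $n$, the rank-width of the $n\times n$ comparability grid is at least $n/4$.
   Context: The $n\times n$ comparability grid is the simple graph with vertex set $\{1,\dots,n\}^2$ in which distinct $(i,j),(i',j')$ are adjacent iff ($i\le i'$ and $j\le j'$) or ($i\ge i'$ and $j\ge j'$). For $X\subseteq V(G)$, the cut-rank $r(X)$ is the $\mathrm{GF}(2)$-rank of the submatrix of the adjacency matrix with rows $X$ and columns $V(G)\setminus X$. A rank-decomposition of $G$ is a tree $T$ all of whose vertices have degree $1$ or $3$, together with a bijection between the leaves of $T$ and $V(G)$; each edge $e$ of $T$ splits the leaves, hence $V(G)$, into two parts $(X_e,Y_e)$, and the width of $e$ is $r(X_e)$. The width of the decomposition is the maximum width of its edges, and the rank-width $rw(G)$ is the minimum width over all rank-decompositions of $G$. *)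

(* Defs.v *)
From HB Require Import structures.
From mathcomp Require Import all_boot all_order all_algebra.
Set Implicit Arguments. Unset Strict Implicit. Unset Printing Implicit Defensive.
Import GRing.Theory.
Local Open Scope ring_scope.
Local Open Scope nat_scope.

Definition simple_graph (V : finType) (adj : rel V) : Prop :=
  (forall x y, adj x y = adj y x) /\ (forall x, ~~ adj x x).

Definition cut_rank (V : finType) (adj : rel V) (X : {set V}) : nat :=
  \rank (\matrix_(i < #|X|, j < #|~: X|)
           ((adj (enum_val i) (enum_val j))%:R : 'F_2))%R.

Definition connected_graph (T : finType) (e : rel T) : Prop :=
  forall x y, connect e x y.

Definition has_cycle (T : finType) (e : rel T) : Prop :=
  exists (x : T) (p : seq T),
    [/\ uniq (x :: p), 2 <= size p, path e x p & e (last x p) x].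

Definition is_tree (T : finType) (e : rel T) : Prop :=
  [/\ simple_graph e, connected_graph e & ~ has_cycle e].

Definition degree (T : finType) (e : rel T) (t : T) : nat := #|[set u | e t u]|.

Definition is_leaf (T : finType) (e : rel T) (t : T) : bool := degree e t == 1.

Definition del_edge (T : finType) (e : rel T) (u v : T) : rel T :=
  fun x y => e x y && ~~ ((x == u) && (y == v)) && ~~ ((x == v) && (y == u)).

Definition rank_decomposition (V T : finType) (e : rel T) (f : V -> T) : Prop :=
  [/\ is_tree e,
      (forall t, degree e t = 1 \/ degree e t = 3),
      injective f
    & (forall t, is_leaf e t <-> exists v, f v = t)].

Definition edge_part (V T : finType) (e : rel T) (f : V -> T) (u v : T) : {set V} :=
  [set x | connect (del_edge e u v) u (f x)].

Definition decomposition_width (V T : finType) (adj : rel V) (e : rel T)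
    (f : V -> T) : nat :=
  \max_(p : T * T | e p.1 p.2) cut_rank adj (edge_part e f p.1 p.2).

(* vertex set {1..n}^2, represented by 'I_n * 'I_n (shift by one) *)
Definition grid_vertex (n : nat) : finType := ('I_n * 'I_n)%type.

Definition comp_grid (n : nat) : rel (grid_vertex n) :=
  fun a b => (a != b) &&
    ((((a.1 <= b.1) && (a.2 <= b.2))%N) || (((b.1 <= a.1) && (b.2 <= a.2))%N)).
Arguments comp_grid n : clear implicits.

(* Main.v *)
Require Import Defs.
From mathcomp Require Import all_boot all_order all_algebra.
From mathcomp Require Import zify.
Set Implicit Arguments. Unset Strict Implicit. Unset Printing Implicit Defensive.

Section Tree.
Variables (T : finType) (e : rel T).
Hypothesis esym : forall x y, e x y = e y x.
Hypothesis eirr : forall x, ~~ e x x.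
Hypothesis acyc : ~ has_cycle e.

Definition comp (a b : T) : {set T} := [set t | connect (del_edge e a b) a t].

Lemma compE a b t : (t \in comp a b) = connect (del_edge e a b) a t.
Proof. by rewrite inE. Qed.

Lemma del_sub a b : subrel (del_edge e a b) e.
Proof. by move=> x y /andP[/andP[]]. Qed.

Lemma e_neq x y : e x y -> x != y.
Proof. by move=> H; apply/eqP => E; move: H; rewrite E (negbTE (eirr y)). Qed.

Lemma notin_comp v w : e v w -> v \notin comp w v.
Proof.
move=> Hvw; rewrite inE; apply/negP => /connectP[p Hp Ev].
case/shortenP: Hp Ev => p' Hp' Up' _ Ev.
case/lastP: p' Hp' Up' Ev => [|q v'] Hp' Up' Ev.
  by move: (e_neq Hvw); rewrite /= in Ev; rewrite Ev eqxx.
rewrite last_rcons in Ev; subst v'.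
case: q Hp' Up' => [|y q] Hp' Up'.
  by move: Hp' => /= /andP[/andP[/andP[_]]]; rewrite !eqxx.
apply: acyc; exists v, (w :: y :: q); split.
- move: Up'; rewrite /= !mem_rcons !inE rcons_uniq !negb_or.
  rewrite mem_rcons inE negb_or.
  move=> /and4P[/andP[wy /andP[wv wq]] /andP[yv yq] vq uq].
  by rewrite (eq_sym v w) (eq_sym v y) wv yv vq wy wq yq uq.
- by [].
- rewrite /= Hvw /=.
  move: Hp'; rewrite rcons_path => /andP[H _].
  exact: (sub_path (@del_sub w v) H).
- move: Hp'; rewrite rcons_path => /andP[_ H].
  exact: (del_sub H).
Qed.


Lemma path_avoid (d d' : rel T) v x p :
  (forall x y, x != v -> y != v -> d x y -> d' x y) ->
  v \notin x :: p -> path d x p -> path d' x p.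
Proof.
move=> H vn; apply: (sub_in_path (P := predC1 v)).
- by move=> a b /= av bv; apply: H.
- apply/allP => z zin /=; apply/eqP => E; move: vn; by rewrite -E zin.
Qed.

Lemma comp_sub u v w : e u v -> e v w -> w != u -> comp w v \subset comp v u.
Proof.
move=> Huv Hvw wu; apply/subsetP => t; rewrite !inE => /connectP[p Hp Et].
case/shortenP: Hp Et => p' Hp' Up' _ Et.
have vn : v \notin w :: p'.
  apply/negP => vin; move: (notin_comp Hvw); rewrite inE.
  by rewrite (path_connect Hp' vin).
apply/connectP; exists (w :: p') => //=.
have vu : v != u by rewrite eq_sym; exact: e_neq Huv.
rewrite /del_edge Hvw eqxx /= (negbTE wu) (negbTE vu) /=.
apply: (path_avoid (v := v)) Hp' => // x y xv yv /andP[/andP[Hxy _] _].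
by rewrite /del_edge Hxy (negbTE xv) (negbTE yv) !andbF.
Qed.

Lemma comp_proper u v w : e u v -> e v w -> w != u -> comp w v \proper comp v u.
Proof.
move=> Huv Hvw wu; apply/properP; split; first exact: comp_sub.
exists v; last exact: notin_comp.
by rewrite inE connect0.
Qed.

Lemma comp_ind (Q : T -> T -> Prop) :
  (forall u v, e u v -> (forall w, e v w -> w != u -> Q v w) -> Q u v) ->
  forall u v, e u v -> Q u v.
Proof.
move=> step u v.
move: {2}#|comp v u| (leqnn #|comp v u|) => k.
elim: k u v => [|k IH] u v Hk Huv.
  by move: Hk; rewrite leqn0 cards_eq0 => /eqP E; move: (in_set0 v); rewrite -E inE connect0.
apply: step => // w Hvw wu; apply: IH => //.
by rewrite -ltnS; apply: leq_trans Hk; apply: proper_card; apply: comp_proper.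
Qed.

Lemma leaf_comp u v : degree e v = 1 -> e u v -> comp v u \subset [set v].
Proof.
move=> Dv Huv; have Hvu : e v u by rewrite esym.
move: Dv; rewrite /degree => /eqP/cards1P[z Ez].
have uz : u = z by apply/set1P; rewrite -Ez inE.
apply/subsetP => t; rewrite compE => /connectP[[|y p] Hp Et]; first by rewrite Et inE.
move: Hp => /= /andP[/andP[/andP[Hvy]]]; rewrite eqxx /=.
have : y \in [set z] by rewrite -Ez inE.
by rewrite inE -uz => ->.
Qed.

Lemma split_comp u v : degree e v = 3 -> e u v ->
  exists w1 w2, [/\ e v w1, e v w2, w1 != u, w2 != u &
     comp v u \subset v |: (comp w1 v :|: comp w2 v)].
Proof.
move=> Dv Huv; have Hvu : e v u by rewrite esym.
pose Nb := [set y | e v y].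
have c2 : #|Nb :\ u| == 2.
  by move: Dv; rewrite /degree -/Nb (cardsD1 u) inE Hvu add1n => -[->].
case/cards2P: c2 => w1 [w2 [_ E]].
have h1 : w1 \in Nb :\ u by rewrite E !inE eqxx.
have h2 : w2 \in Nb :\ u by rewrite E !inE eqxx orbT.
move: (h1) (h2); rewrite !inE => /andP[w1u ew1] /andP[w2u ew2].
exists w1, w2; split => //.
apply/subsetP => t; rewrite compE => /connectP[p Hp Et].
case/shortenP: Hp Et => p' Hp' Up' _ Et.
case: p' Hp' Up' Et => [|y q] Hp' Up' Et; first by rewrite Et !inE eqxx.
move: Hp' => /= /andP[/andP[/andP[Hvy]]]; rewrite eqxx /= => yu _ Hq.
have yN : y \in Nb :\ u by rewrite !inE yu Hvy.
have vn : v \notin y :: q by move: Up'; rewrite /= => /andP[].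
have tc : t \in comp y v.
  rewrite compE; apply/connectP; exists q => //.
  apply: (path_avoid (v := v)) Hq => // x z xv zv /andP[/andP[Hxz _] _].
  by rewrite /del_edge Hxz (negbTE xv) (negbTE zv) !andbF.
move: yN; rewrite E !inE => /orP[/eqP Ey|/eqP Ey]; subst y;
  apply/orP; right; apply/orP; [left|right]; by rewrite -compE.
Qed.

Hypothesis conn : connected_graph e.

Lemma cover u v t : e u v -> (t \in comp u v) || (t \in comp v u).
Proof.
move=> Huv; have /connectP[p Hp Et] := conn u t.
case/shortenP: Hp Et => p' Hp' Up' _ Et.
case: p' Hp' Up' Et => [|y q] Hp' Up' Et; first by rewrite Et compE connect0.
move: Hp' => /= /andP[Huy Hq].
have un : u \notin y :: q by move: Up'; rewrite /= => /andP[].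
have uv : u != v by exact: e_neq.
case: (eqVneq y v) => [Eyv|yv].
  apply/orP; right; rewrite compE; apply/connectP; exists q; last by rewrite -Eyv.
  rewrite -Eyv; apply: (path_avoid (v := u)) _ un Hq.
  move=> x z xu zu Hxz.
  by rewrite /del_edge Hxz (negbTE xu) (negbTE zu) !andbF.
apply/orP; left; rewrite compE; apply/connectP; exists (y :: q) => //=.
rewrite /del_edge Huy eqxx (negbTE yv) (negbTE uv) /=.
apply: (path_avoid (v := u)) _ un Hq => x z xu zu Hxz.
by rewrite /del_edge Hxz (negbTE xu) (negbTE zu) !andbF.
Qed.

End Tree.

From mathcomp Require Import zify.

Section Decomp.
Variables (V T : finType) (e : rel T) (f : V -> T).
Hypothesis RD : rank_decomposition e f.

Let tree : is_tree e. Proof. by case: RD. Qed.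
Let esym : forall x y, e x y = e y x. Proof. by case: tree => -[]. Qed.
Let eirr : forall x, ~~ e x x. Proof. by case: tree => -[]. Qed.
Let conn : connected_graph e. Proof. by case: tree. Qed.
Let acyc : ~ has_cycle e. Proof. by case: tree. Qed.
Let deg13 : forall t, degree e t = 1 \/ degree e t = 3. Proof. by case: RD. Qed.
Let finj : injective f. Proof. by case: RD. Qed.
Let leafP : forall t, is_leaf e t <-> exists v, f v = t. Proof. by case: RD. Qed.

Let degf x : degree e (f x) = 1.
Proof. by apply/eqP; apply/leafP; exists x. Qed.

Local Notation g u v := #|edge_part e f u v|.

Lemma edge_partE u v x : (x \in edge_part e f u v) = (f x \in comp e u v).
Proof. by rewrite !inE. Qed.

Lemma card_fiber v : (#|[set x | f x == v]| <= 1)%N.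
Proof.
apply/card_le1_eqP => x y; rewrite !inE => /eqP fx /eqP fy.
by apply: finj; rewrite fx fy.
Qed.

Lemma neighbor_of_leaf t : degree e t = 1 -> exists u, e t u.
Proof.
rewrite /degree => /eqP/cards1P[z Ez]; exists z.
have : z \in [set z] by rewrite inE.
by rewrite -Ez inE.
Qed.

Lemma no_single : #|V| = 1 -> False.
Proof.
move=> N1.
have Dgen : forall u v, e u v -> exists t, t \in comp e v u /\ degree e t = 1.
  apply: (comp_ind eirr acyc) => u v Huv IH.
  case: (deg13 v) => Dv; first by exists v; rewrite compE connect0.
  have [w1 [w2 [Hw1 _ w1u _ _]]] := split_comp esym Dv Huv.
  have [t [tc Dt]] := IH w1 Hw1 w1u.
  exists t; split => //; apply: (subsetP (comp_sub eirr acyc Huv Hw1 w1u)) tc.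
have [x0 _] : exists x0 : V, true.
  have : (0 < #|V|)%N by rewrite N1.
  by case/card_gt0P => x0 _; exists x0.
have [u Hu] := neighbor_of_leaf (degf x0).
have [t [tc Dt]] := Dgen _ _ Hu.
have [x fx] : exists x, f x = t by apply/leafP; apply/eqP.
have xx0 : x = x0.
  have le1 : (#|V| <= 1)%N by rewrite N1.
  move/card_le1_eqP: le1 => H; exact: H.
by move: (notin_comp eirr acyc Hu); rewrite -fx xx0 in tc; rewrite tc.
Qed.

Lemma balanced : (2 <= #|V|)%N -> exists u v,
  [/\ e u v, (#|V| <= 4 * g u v)%N & (4 * g u v <= 3 * #|V|)%N].
Proof.
move=> N2.
case: (boolP [exists p : T * T, [&& e p.1 p.2, #|V| <= 4 * g p.1 p.2 & 4 * g p.1 p.2 <= 3 * #|V|]]).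
  by case/existsP => -[u v] /and3P[H1 H2 H3]; exists u, v.
rewrite negb_exists => /forallP nb.
have nb' : forall u v, e u v -> (4 * g u v < #|V|)%N \/ (3 * #|V| < 4 * g u v)%N.
  move=> u v Huv; move: (nb (u, v)); rewrite /= Huv /= negb_and -!ltnNge => /orP[]; auto.
have Q : forall u v, e u v -> (4 * g v u <= 3 * #|V|)%N.
  apply: (comp_ind eirr acyc) => u v Huv IH.
  case: (deg13 v) => Dv.
  - have S : edge_part e f v u \subset [set x | f x == v].
      apply/subsetP => x; rewrite edge_partE => H.
      by move: (subsetP (leaf_comp esym Dv Huv) _ H); rewrite !inE.
    have := leq_trans (subset_leq_card S) (card_fiber v). lia.
  - have [w1 [w2 [Hw1 Hw2 w1u w2u S]]] := split_comp esym Dv Huv.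
    have S' : edge_part e f v u \subset edge_part e f w1 v :|: edge_part e f w2 v.
      apply/subsetP => x; rewrite edge_partE => H.
      move: (subsetP S _ H); rewrite in_setU1 => /orP[/eqP E|].
        by move: (degf x); rewrite E Dv.
      by rewrite !in_setU !edge_partE.
    have L1 : (4 * g w1 v < #|V|)%N.
      case: (nb' w1 v) => //; first by rewrite esym.
      by move: (IH w1 Hw1 w1u); lia.
    have L2 : (4 * g w2 v < #|V|)%N.
      case: (nb' w2 v) => //; first by rewrite esym.
      by move: (IH w2 Hw2 w2u); lia.
    have := leq_trans (subset_leq_card S') (leq_card_setU _ _). lia.
have [x0 _] : exists x0 : V, true.
  have : (0 < #|V|)%N by lia.
  by case/card_gt0P => x0 _; exists x0.
have [u Hu] := neighbor_of_leaf (degf x0).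
have Hu' : e u (f x0) by rewrite esym.
have A1 := Q _ _ Hu.
have A2 := Q _ _ Hu'.
have B1 : (4 * g u (f x0) < #|V|)%N.
  case: (nb' _ _ Hu') => //; lia.
have B2 : (4 * g (f x0) u < #|V|)%N.
  case: (nb' _ _ Hu) => //; lia.
have S : [set: V] \subset edge_part e f (f x0) u :|: edge_part e f u (f x0).
  apply/subsetP => x _; rewrite in_setU !edge_partE.
  exact: (cover eirr conn (f x) Hu).
have := leq_trans (subset_leq_card S) (leq_card_setU _ _).
rewrite cardsT; lia.
Qed.
End Decomp.

Section RankPart.
Import GRing.Theory.
Local Open Scope ring_scope.

Lemma enum_val_mono m (A : {set 'I_m}) (i j : 'I_#|A|) :
  (i < j)%N -> (enum_val i < enum_val j)%N.
Proof.
move=> lt_ij.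
have s : sorted (relpre val ltn) (enum A).
  rewrite /enum_mem.
  apply: sorted_filter; first by move=> a b c /= ; apply: ltn_trans.
  by have := iota_ltn_sorted 0 m; rewrite -val_enum_ord sorted_map enumT.
have x0 : 'I_m by case: (enum_val i) => k; case: m {A i j lt_ij s} => // k' H; exact ord0.
rewrite !(enum_val_nth x0).
apply: (sorted_ltn_nth (leT := relpre val ltn)) => //.
- by move=> a b c /=; apply: ltn_trans.
- by rewrite inE -cardE.
- by rewrite inE -cardE.
Qed.

Lemma rank_sub (F : fieldType) m n m' n' (f : 'I_m' -> 'I_m) (g : 'I_n' -> 'I_n) (A : 'M[F]_(m, n)) :
  (\rank (mxsub f g A) <= \rank A)%N.
Proof.
have -> : mxsub f g A = rowsub f 1%:M *m colsub g A.
  by rewrite -mxsub_mul mul1mx.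
apply: leq_trans (mxrankM_maxr _ _) _.
have -> : colsub g A = A *m colsub g 1%:M.
  by rewrite -[X in X *m _]mxsub_id -mxsub_mul mulmx1.
exact: mxrankM_maxl.
Qed.

Lemma rank_lb (V : finType) (adj : rel V) (X : {set V}) k (x y : 'I_k -> V) :
  (forall i, x i \in X) -> (forall i, y i \in ~: X) -> (forall i, adj (x i) (y i)) ->
  ((forall i j : 'I_k, (i < j)%N -> adj (x i) (y j) = false) \/
   (forall i j : 'I_k, (j < i)%N -> adj (x i) (y j) = false)) ->
  (k <= cut_rank adj X)%N.
Proof.
case: k x y => [//|k] x y Hx Hy Hd Ht.
pose fr i := enum_rank_in (Hx ord0) (x i).
pose fc j := enum_rank_in (Hy ord0) (y j).
rewrite /cut_rank.
apply: leq_trans (rank_sub fr fc _).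
have E : mxsub fr fc (\matrix_(i < #|X|, j < #|~:X|) ((adj (enum_val i) (enum_val j))%:R : 'F_2))
    = \matrix_(i,j) ((adj (x i) (y j))%:R : 'F_2).
  by apply/matrixP=> i j; rewrite !mxE /fr /fc !enum_rankK_in.
rewrite E mxrank_unit // unitmxE.
have D : forall i : 'I_k.+1, (\matrix_(i,j) ((adj (x i) (y j))%:R : 'F_2)) i i = 1.
  by move=> i; rewrite mxE Hd.
case: Ht => H.
- rewrite det_trig; last by apply/is_trig_mxP => i j lt; rewrite mxE H.
  by rewrite big1 ?unitr1 // => i _; rewrite D.
- rewrite -det_tr det_trig; last by apply/is_trig_mxP => i j lt; rewrite !mxE H.
  by rewrite big1 ?unitr1 // => i _; rewrite mxE D.
Qed.

Lemma rank_lb_set (V : finType) (adj : rel V) (X : {set V}) m (S : {set 'I_m})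
  (x y : 'I_m -> V) :
  {in S, forall r, x r \in X} -> {in S, forall r, y r \in ~: X} ->
  {in S, forall r, adj (x r) (y r)} ->
  ((forall r r', r \in S -> r' \in S -> (r < r')%N -> adj (x r) (y r') = false) \/
   (forall r r', r \in S -> r' \in S -> (r' < r)%N -> adj (x r) (y r') = false)) ->
  (#|S| <= cut_rank adj X)%N.
Proof.
move=> Hx Hy Hd Ht.
apply: (rank_lb (x := fun i => x (enum_val i)) (y := fun i => y (enum_val i))).
- by move=> i; apply: Hx; apply: enum_valP.
- by move=> i; apply: Hy; apply: enum_valP.
- by move=> i; apply: Hd; apply: enum_valP.
case: Ht => H; [left|right] => i j lt; apply: H; rewrite ?enum_valP //;
  exact: enum_val_mono.
Qed.

Section Grid.
Variable m : nat.
Local Notation n := m.+1.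
Local Notation V := (grid_vertex n).
Local Notation adj := (comp_grid n).

Lemma mixed_bound (X : {set V}) (P : 'I_n -> 'I_n -> V)
  (H1 : forall (r d : 'I_n), d != ord0 -> adj (P r ord0) (P r d))
  (H1' : forall (r d : 'I_n), d != ord0 -> adj (P r d) (P r ord0))
  (H2 : forall (r r' d : 'I_n), (r' < r)%N -> d != ord0 -> adj (P r ord0) (P r' d) = false)
  (H3 : forall (r r' c : 'I_n), (r < r')%N -> c != ord0 -> adj (P r c) (P r' ord0) = false) :
  (#|[set r | [exists c, P r c \in X] && [exists d, P r d \notin X]]| <= 2 * cut_rank adj X)%N.
Proof.
pose SL := [set r | (P r ord0 \in X) && [exists d, P r d \notin X]].
pose SR := [set r | (P r ord0 \notin X) && [exists c, P r c \in X]].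
pose dL r := odflt ord0 [pick d | P r d \notin X].
pose cR r := odflt ord0 [pick c | P r c \in X].
have hL : forall r, r \in SL -> (P r (dL r) \notin X) && (dL r != ord0).
  move=> r; rewrite inE => /andP[H0 /existsP[d Hd]].
  rewrite /dL; case: pickP => [d' Hd'|/(_ d)]; last by rewrite Hd.
  rewrite Hd' /=; apply/eqP => E; move: Hd'; by rewrite E H0.
have hR : forall r, r \in SR -> (P r (cR r) \in X) && (cR r != ord0).
  move=> r; rewrite inE => /andP[H0 /existsP[d Hd]].
  rewrite /cR; case: pickP => [d' Hd'|/(_ d)]; last by rewrite Hd.
  rewrite Hd' /=; apply/eqP => E; move: Hd'; rewrite E; by apply/negP.
have rL : (#|SL| <= cut_rank adj X)%N.
  apply: (rank_lb_set (x := fun r => P r ord0) (y := fun r => P r (dL r))).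
  - by move=> r; rewrite inE => /andP[].
  - by move=> r /hL /andP[]; rewrite inE.
  - by move=> r /hL /andP[_]; apply: H1.
  - right=> r r' _ /hL /andP[_ Hd] lt; exact: H2.
have rR : (#|SR| <= cut_rank adj X)%N.
  apply: (rank_lb_set (x := fun r => P r (cR r)) (y := fun r => P r ord0)).
  - by move=> r /hR /andP[].
  - by move=> r; rewrite inE => /andP[H _]; rewrite inE.
  - by move=> r /hR /andP[_]; apply: H1'.
  - left=> r r' /hR /andP[_ Hd] _ lt; exact: H3.
apply: (@leq_trans #|SL :|: SR|).
  apply: subset_leq_card; apply/subsetP => r; rewrite !inE.
  case/andP=> [/existsP[c Hc] /existsP[d Hd]].
  case: (boolP (P r ord0 \in X)) => H0 /=; rewrite ?H0 ?orbT /=.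
  - by rewrite orbF; apply/existsP; exists d.
  - by apply/existsP; exists c.
apply: leq_trans (leq_card_setU _ _) _.
by rewrite mul2n -addnn leq_add.
Qed.
End Grid.


Section Grid2.
Variable m : nat.
Local Notation n := m.+1.
Local Notation V := (grid_vertex n).
Local Notation adj := (comp_grid n).

Lemma ord_neq0 (d : 'I_n) : d != ord0 -> (0 < d)%N.
Proof. by rewrite lt0n; apply: contra => /eqP E; apply/eqP/val_inj. Qed.

Definition mixR (X : {set V}) :=
  [set r | [exists c, ((r, c) : V) \in X] && [exists d, ((r, d) : V) \notin X]].
Definition mixC (X : {set V}) :=
  [set c | [exists r, ((r, c) : V) \in X] && [exists d, ((d, c) : V) \notin X]].

Lemma rows_bound X : (#|mixR X| <= 2 * cut_rank adj X)%N.
Proof.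
apply: (@mixed_bound m X (fun r d => ((r, d) : V))).
- move=> r d /ord_neq0 Hd; rewrite /comp_grid /= xpair_eqE eqxx /=.
  apply/andP; split; first by apply/eqP => E; move: Hd; rewrite -E.
  by apply/orP; left; rewrite leqnn.
- move=> r d /ord_neq0 Hd; rewrite /comp_grid /= xpair_eqE eqxx /=.
  apply/andP; split; first by apply/eqP => E; move: Hd; rewrite E.
  by apply/orP; right; rewrite leqnn.
- move=> r r' d lt /ord_neq0 Hd; rewrite /comp_grid /=.
  apply/negbTE/negP => /andP[_]; lia.
- move=> r r' d lt /ord_neq0 Hd; rewrite /comp_grid /=.
  apply/negbTE/negP => /andP[_]; lia.
Qed.

Lemma cols_bound X : (#|mixC X| <= 2 * cut_rank adj X)%N.
Proof.
apply: (@mixed_bound m X (fun r d => ((d, r) : V))).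
- move=> r d /ord_neq0 Hd; rewrite /comp_grid /= xpair_eqE eqxx /= andbT.
  apply/andP; split; first by apply/eqP => E; move: Hd; rewrite -E.
  by apply/orP; left; rewrite leqnn.
- move=> r d /ord_neq0 Hd; rewrite /comp_grid /= xpair_eqE eqxx /= andbT.
  apply/andP; split; first by apply/eqP => E; move: Hd; rewrite E.
  by apply/orP; right; rewrite leqnn.
- move=> r r' d lt /ord_neq0 Hd; rewrite /comp_grid /=.
  apply/negbTE/negP => /andP[_]; lia.
- move=> r r' d lt /ord_neq0 Hd; rewrite /comp_grid /=.
  apply/negbTE/negP => /andP[_]; lia.
Qed.
End Grid2.

Section Count.
Variable m : nat.
Local Notation n := m.+1.
Local Notation V := (grid_vertex n).

Lemma count_mixed (X : {set V}) :
  (n * n <= 4 * #|X|)%N -> (n * n <= 4 * #|~: X|)%N ->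
  (n <= 2 * #|mixR X|)%N \/ (n <= 2 * #|mixC X|)%N.
Proof.
move=> HX HY.
case: (leqP n (2 * #|mixR X|)) => [h|hR]; first by left.
case: (leqP n (2 * #|mixC X|)) => [h|hC]; first by right.
exfalso.
have hRC : (4 * (#|mixR X| * #|mixC X|) < n * n)%N by nia.
have cardT : forall A : {set 'I_n}, A = setT -> #|A| = n.
  by move=> A ->; rewrite cardsT card_ord.
case: (boolP [exists r, [forall c, ((r, c) : V) \in X]]) => fXr;
case: (boolP [exists c, [forall r, ((r, c) : V) \in X]]) => fXc;
case: (boolP [exists r, [forall c, ((r, c) : V) \notin X]]) => fYr;
case: (boolP [exists c, [forall r, ((r, c) : V) \notin X]]) => fYc.
all: try (move: fXr fYc => /existsP[r0 /forallP Hr] /existsP[c0 /forallP Hc];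
          by move: (Hr c0) (Hc r0) => ->).
all: try (move: fXc fYr => /existsP[c0 /forallP Hc] /existsP[r0 /forallP Hr];
          by move: (Hc r0) (Hr c0) => ->).
all: try (move: fXr fYr => /existsP[r0 /forallP Hr] /existsP[r1 /forallP Hr1];
   have E : mixC X = setT; [
     (apply/setP => c; rewrite !inE; apply/andP; split; apply/existsP;
       [exists r0; exact: Hr | exists r1; exact: Hr1]) | ];
   by move: hC; rewrite (cardT _ E); lia).
all: try (move: fXc fYc => /existsP[c0 /forallP Hc] /existsP[c1 /forallP Hc1];
   have E : mixR X = setT; [
     (apply/setP => r; rewrite !inE; apply/andP; split; apply/existsP;
       [exists c0; exact: Hc | exists c1; exact: Hc1]) | ];
   by move: hR; rewrite (cardT _ E); lia).
all: try (
  have S : X \subset setX (mixR X) (mixC X); [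
    (apply/subsetP => -[r c] Hrc; rewrite !inE /=; apply/andP; split; apply/andP; split;
    [ by apply/existsP; exists c
    | move: fXr; rewrite negb_exists => /forallP /(_ r); rewrite negb_forall => /existsP[c' ?]; by apply/existsP; exists c'
    | by apply/existsP; exists r
    | move: fXc; rewrite negb_exists => /forallP /(_ c); rewrite negb_forall => /existsP[r' ?]; by apply/existsP; exists r' ]) | ];
  move: (subset_leq_card S); rewrite cardsX; lia).
all: try (
  have S : ~: X \subset setX (mixR X) (mixC X); [
    (apply/subsetP => -[r c]; rewrite inE => Hrc; rewrite !inE /=; apply/andP; split; apply/andP; split;
    [ move: fYr; rewrite negb_exists => /forallP /(_ r); rewrite negb_forall => /existsP[c' ]; rewrite negbK => ?; by apply/existsP; exists c'
    | by apply/existsP; exists c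
    | move: fYc; rewrite negb_exists => /forallP /(_ c); rewrite negb_forall => /existsP[r' ]; rewrite negbK => ?; by apply/existsP; exists r'
    | by apply/existsP; exists r ]) | ];
  move: (subset_leq_card S); rewrite cardsX; lia).
Qed.
End Count.

End RankPart.

Lemma grid_cut m (X : {set grid_vertex m.+1}) :
  (m.+1 * m.+1 <= 4 * #|X|)%N -> (m.+1 * m.+1 <= 4 * #|~: X|)%N ->
  (m.+1 <= 4 * cut_rank (comp_grid m.+1) X)%N.
Proof.
move=> HX HY.
have R := rows_bound X; have C := cols_bound X.
case: (count_mixed HX HY) => H; lia.
Qed.

Theorem mainTheorem9 (n : nat) (n_pos : (0 < n)%N)
    (T : finType) (e : rel T) (f : grid_vertex n -> T) :
  rank_decomposition e f ->
  (n <= 4 * decomposition_width (comp_grid n) e f)%N.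
Proof.
move=> RD.
case: n n_pos f RD => [//|m] _ f RD.
have cardV : #|grid_vertex m.+1| = (m.+1 * m.+1)%N by rewrite card_prod card_ord.
case: m f RD cardV => [|m'] f RD cardV.
  by exfalso; apply: (no_single RD); rewrite cardV.
have [u [v [Huv H1 H2]]] := balanced RD (ltac:(rewrite cardV; lia)).
set X := edge_part e f u v in H1 H2.
have HX : (m'.+2 * m'.+2 <= 4 * #|X|)%N by rewrite -cardV.
have HY : (m'.+2 * m'.+2 <= 4 * #|~: X|)%N.
  have := cardsC X; rewrite cardV; lia.
apply: leq_trans (grid_cut HX HY) _.
rewrite leq_mul2l /=.
rewrite /decomposition_width.
exact: (leq_bigmax_cond (F := fun p : T * T => cut_rank (comp_grid m'.+2) (edge_part e f p.1 p.2)) (u, v) Huv).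
Qed.
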